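(* Let $n\ge3$ and let $V:\mathbb{R}^n\to\mathbb{R}$ be $C^1$ and satisfy: there is $L>0$ such that for all $x$ with $|x_1|>L$, $-x_j\,\partial_{x_j}V(x)\ge0$ for every $j=1,\dots,n$. Then for every $x'\in\mathbb{R}^n$ and every $x\notin[-L,L]\times\mathbb{R}^{n-1}$ (with $x\notin\operatorname{sym}\{x'\}$), $$ i\Big[V,\sum_{c\in\operatorname{sym}\{x'\}}\gamma_c^{Mor}\Big](x)=\sum_{j=1}^n\Big\{-2\,\partial_{x_j}V(x)\sum_{c\in\operatorname{sym}\{x'\}}\frac{x_j-c_j}{|x-c|}\Big\}\ \ge\ 0. $$
   Context: $\gamma_c^{Mor}=-i\big(\frac{x-c}{|x-c|}\cdot\nabla+\nabla\cdot\frac{x-c}{|x-c|}\big)$, so $i[V,\gamma_c^{Mor}]$ is multiplication by $-2\frac{x-c}{|x-c|}\cdot\nabla V$. For $x'=(x'_1,\dots,x'_n)$, $\operatorname{sym}\{x'\}=\{(\pm x'_1,\dots,\pm x'_n)\}$, the set of all points obtained by independent sign changes of the coordinates (as a set, so repeated points counted once). *)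

(* Defs.v *)
From HB Require Import structures.
From mathcomp Require Import all_boot all_order all_algebra.
From mathcomp Require Import all_classical all_reals all_analysis.
Set Implicit Arguments. Unset Strict Implicit. Unset Printing Implicit Defensive.
Import Order.TTheory GRing.Theory Num.Theory.
Import numFieldNormedType.Exports.
Local Open Scope ring_scope.

(* Euclidean norm |x| (the library norm on matrices is the sup norm). *)
Definition enorm (R : realType) (n : nat) (x : 'rV[R]_n) : R :=
  Num.sqrt (\sum_(k < n) (x 0 k) ^+ 2).

Definition partial (R : realType) (n : nat) (V : 'rV[R]_n -> R) (j : 'I_n)
  (x : 'rV[R]_n) : R := 'D_(delta_mx 0 j) V x.

Definition C1 (R : realType) (n : nat) (V : 'rV[R]_n -> R) : Prop :=
  (forall x, differentiable V x) /\ (forall j, continuous (partial V j)).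

(* sym{x'} : all points obtained by independent sign changes of the
   coordinates, as a duplicate-free list (repeated points counted once). *)
Definition sym (R : realType) (n : nat) (x' : 'rV[R]_n) : seq 'rV[R]_n :=
  undup [seq (\row_k ((-1) ^+ (s k) * x' 0 k)) | s : {ffun 'I_n -> bool}].

(* The multiplication operator  i[V, gamma_c^Mor]  =  -2 (x-c)/|x-c| . grad V. *)
Definition comm_mor (R : realType) (n : nat) (V : 'rV[R]_n -> R)
  (c x : 'rV[R]_n) : R :=
  -2 * \sum_(j < n) ((x 0 j - c 0 j) / enorm (x - c) * partial V j x).

(* Main.v *)
Require Import Defs.
From HB Require Import structures.
From mathcomp Require Import all_boot all_order all_algebra.
From mathcomp Require Import all_classical all_reals all_analysis.
From mathcomp Require Import ring lra.
Import Order.TTheory GRing.Theory Num.Theory.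
Import numFieldNormedType.Exports.
Local Open Scope ring_scope.


Lemma f_mono {R : realType} (A t u : R) : 0 <= A -> 0 <= t -> t <= u ->
  t / Num.sqrt (t^+2 + A) <= u / Num.sqrt (u^+2 + A).
Proof.
move=> hA ht htu.
have hu : 0 <= u by lra.
have [->|tpos] := eqVneq t 0.
  by rewrite mul0r divr_ge0 ?sqrtr_ge0.
have tp : 0 < t by rewrite lt0r tpos.
have up : 0 < u by lra.
have st : 0 < Num.sqrt (t^+2 + A) by rewrite sqrtr_gt0; nra.
have su : 0 < Num.sqrt (u^+2 + A) by rewrite sqrtr_gt0; nra.
rewrite ler_pdivrMr // mulrAC ler_pdivlMr //.
rewrite -(@ler_pXn2r _ 2) ?nnegrE //; last 2 first.
- by apply: mulr_ge0; rewrite ?sqrtr_ge0.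
- by apply: mulr_ge0; rewrite ?sqrtr_ge0.
have h2 : t^+2 <= u^+2 by nra.
have h3 : 0 <= (u^+2 - t^+2) * A by apply: mulr_ge0; lra.
rewrite !exprMn !sqr_sqrtr; [nra|nra|nra].
Qed.

Lemma f_odd {R : realType} (A t : R) : (- t) / Num.sqrt ((- t)^+2 + A) = - (t / Num.sqrt (t^+2 + A)).
Proof. by rewrite sqrrN mulNr. Qed.

Lemma pair_ge0 {R : realType} (A a c : R) : 0 <= A -> 0 <= a ->
  0 <= (a - c) / Num.sqrt ((a - c)^+2 + A) + (a + c) / Num.sqrt ((a + c)^+2 + A).
Proof.
move=> hA ha.
have [hp|hp] := lerP 0 (a - c).
  have [hq|hq] := lerP 0 (a + c).
    by apply: addr_ge0; apply: divr_ge0; rewrite ?sqrtr_ge0.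
  have := @f_mono R A (- (a + c)) (a - c) hA ltac:(lra) ltac:(lra).
  rewrite f_odd; lra.
have := @f_mono R A (- (a - c)) (a + c) hA ltac:(lra) ltac:(lra).
rewrite f_odd; lra.
Qed.

Lemma pair_le0 {R : realType} (A a c : R) : 0 <= A -> a <= 0 ->
  (a - c) / Num.sqrt ((a - c)^+2 + A) + (a + c) / Num.sqrt ((a + c)^+2 + A) <= 0.
Proof.
move=> hA ha.
have := @pair_ge0 R A (- a) (- c) hA ltac:(lra).
have -> : - a - - c = - (a - c) by ring.
have -> : - a + - c = - (a + c) by ring.
rewrite !f_odd; lra.
Qed.

Definition reflj {R : realType} {n : nat} (j : 'I_n) (c : 'rV[R]_n) : 'rV[R]_n :=
  \row_k (if k == j then - c 0 k else c 0 k).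

Lemma reflj_invol {R : realType} {n : nat} (j : 'I_n) : involutive (@reflj R n j).
Proof.
move=> c; apply/rowP => k; rewrite !mxE; case: eqP => _ //; by rewrite opprK.
Qed.

Lemma reflj_sym {R : realType} {n : nat} (j : 'I_n) (x' c : 'rV[R]_n) :
  c \in sym x' -> reflj j c \in sym x'.
Proof.
rewrite /sym !mem_undup => /mapP [s _ ->].
apply/mapP; exists [ffun k => if k == j then ~~ s k else s k]; first by rewrite mem_enum.
apply/rowP => k; rewrite !mxE ffunE; case: eqP => _ //.
by case: (s k); rewrite /= ?expr0 ?expr1 ?mulNr ?mul1r ?opprK.
Qed.

Lemma perm_reflj {R : realType} {n : nat} (j : 'I_n) (x' : 'rV[R]_n) :
  perm_eq (map (reflj j) (sym x')) (sym x').
Proof.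
apply: uniq_perm.
- rewrite map_inj_uniq ?undup_uniq //; exact: can_inj (reflj_invol j).
- exact: undup_uniq.
move=> y; apply/mapP/idP => [[c hc ->]|hy]; first exact: reflj_sym.
by exists (reflj j y); [apply: reflj_sym | rewrite reflj_invol].
Qed.

Lemma enorm_split {R : realType} {n : nat} (j : 'I_n) (x c : 'rV[R]_n) :
  enorm (x - c) = Num.sqrt ((x 0 j - c 0 j) ^+ 2 +
     \sum_(k < n | k != j) (x 0 k - c 0 k) ^+ 2).
Proof.
rewrite /enorm (bigD1 j) //= !mxE; congr (Num.sqrt (_ + _)).
by apply: eq_bigr => k _; rewrite !mxE.
Qed.

Lemma pair_term {R : realType} {n : nat} (j : 'I_n) (x c : 'rV[R]_n) :
  (x 0 j - reflj j c 0 j) / enorm (x - reflj j c) =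
  (x 0 j + c 0 j) / Num.sqrt ((x 0 j + c 0 j) ^+ 2 +
     \sum_(k < n | k != j) (x 0 k - c 0 k) ^+ 2).
Proof.
rewrite (enorm_split j) !mxE eqxx opprK; congr (_ / Num.sqrt (_ + _)).
by apply: eq_bigr => k /negbTE hk; rewrite !mxE hk.
Qed.

Lemma Sj_sign {R : realType} {n : nat} (j : 'I_n) (x x' : 'rV[R]_n) :
  2 * \sum_(c <- sym x') ((x 0 j - c 0 j) / enorm (x - c)) =
  \sum_(c <- sym x') ((x 0 j - c 0 j) / Num.sqrt ((x 0 j - c 0 j) ^+ 2 +
     \sum_(k < n | k != j) (x 0 k - c 0 k) ^+ 2) +
     (x 0 j + c 0 j) / Num.sqrt ((x 0 j + c 0 j) ^+ 2 +
     \sum_(k < n | k != j) (x 0 k - c 0 k) ^+ 2)).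
Proof.
rewrite big_split /= (_ : forall y : R, 2 * y = y + y); last by move=> y; ring.
congr (_ + _).
  by apply: eq_bigr => c _; rewrite (enorm_split j).
rewrite -(perm_big _ (perm_reflj j x')) big_map.
by apply: eq_bigr => c _; rewrite pair_term.
Qed.

Lemma Sj_ge0 {R : realType} {n : nat} (j : 'I_n) (x x' : 'rV[R]_n) :
  0 <= x 0 j -> 0 <= \sum_(c <- sym x') ((x 0 j - c 0 j) / enorm (x - c)).
Proof.
move=> hx; rewrite -(pmulr_rge0 _ (_ : 0 < 2)) // Sj_sign.
apply: sumr_ge0 => c _; apply: pair_ge0 => //.
by apply: sumr_ge0 => k _; apply: sqr_ge0.
Qed.

Lemma Sj_le0 {R : realType} {n : nat} (j : 'I_n) (x x' : 'rV[R]_n) :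
  x 0 j <= 0 -> \sum_(c <- sym x') ((x 0 j - c 0 j) / enorm (x - c)) <= 0.
Proof.
move=> hx; rewrite -(pmulr_rle0 _ (_ : 0 < 2)) // Sj_sign.
apply: sumr_le0 => c _; apply: pair_le0 => //.
by apply: sumr_ge0 => k _; apply: sqr_ge0.
Qed.

Theorem lemma4p5 (R : realType) (n : nat) (hn : (3 <= n)%N)
  (i1 : 'I_n) (hi1 : val i1 = 0%N)
  (V : 'rV[R]_n -> R) (hV : C1 V) (L : R) (hL : 0 < L)
  (hdec : forall x : 'rV[R]_n, L < `|x 0 i1| ->
            forall j : 'I_n, 0 <= - x 0 j * partial V j x)
  (x' x : 'rV[R]_n) (hx : L < `|x 0 i1|) (hxs : x \notin sym x') :
  \sum_(c <- sym x') comm_mor V c x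
    = \sum_(j < n) (-2 * partial V j x *
         \sum_(c <- sym x') ((x 0 j - c 0 j) / enorm (x - c)))
  /\ 0 <= \sum_(j < n) (-2 * partial V j x *
         \sum_(c <- sym x') ((x 0 j - c 0 j) / enorm (x - c))).
Proof.
split.
  rewrite /comm_mor -mulr_sumr exchange_big /= mulr_sumr; apply: eq_bigr => j _.
  rewrite -mulrA !mulr_sumr; apply: eq_bigr => c _; ring.
apply: sumr_ge0 => j _.
have hd := hdec x hx j.
have h1 := @Sj_ge0 R n j x x'.
have h2 := @Sj_le0 R n j x x'.
set S := \sum_(c <- _) _ in h1 h2 *.
set p := partial V j x in hd *.
have [hj|hj|hj] := ltgtP (x 0 j) 0.
- have := h2 (ltW hj); nra.
- have := h1 (ltW hj); nra.
- have hS : S = 0 by apply/eqP; rewrite eq_le h2 ?h1 ?hj.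
  by rewrite hS mulr0.
Qed.
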